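(* Let $\Gamma$ be a countable discrete group, $\gamma_1\neq\gamma_2\in\Gamma$, $a,b\in\mathbb{C}\setminus\{0\}$, and $f=a\delta_{\gamma_1}+b\delta_{\gamma_2}\in\ell_2(\Gamma)$. If $|a|\neq|b|$, then $\{\lambda(\gamma)f:\gamma\in\Gamma\}$ is a Riesz basis for $\ell_2(\Gamma)$.
   Context: $\lambda$ is the left regular representation of $\Gamma$ on $\ell_2(\Gamma)$, $\lambda(\gamma)\delta_{\gamma'}=\delta_{\gamma\gamma'}$, where $\{\delta_\gamma\}$ is the canonical basis. *)

(* Defs.v *)
From HB Require Import structures.
From mathcomp Require Import all_boot all_order all_algebra.
From mathcomp Require Import complex.
From mathcomp Require Import all_classical all_reals all_analysis.
Set Implicit Arguments. Unset Strict Implicit. Unset Printing Implicit Defensive.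
Import Order.TTheory GRing.Theory Num.Theory.
Local Open Scope ring_scope.
Local Open Scope classical_set_scope.
Local Open Scope complex_scope.

Section L2.
Variables (R : realType) (G : groupType).

Definition sqmod (z : R[i]) : R := complex.Re z ^+ 2 + complex.Im z ^+ 2.

Definition in_l2 (x : G -> R[i]) : Prop := summable [set: G] (fun g => (sqmod (x g))%:E).

Definition l2norm2 (x : G -> R[i]) : R :=
  fine (\esum_(g in [set: G]) (sqmod (x g))%:E)%E.

Definition delta (g : G) : G -> R[i] := fun h => if h == g then 1 else 0.

(* left regular representation: (lambda g x)(h) = x (g^-1 h),
   so that lambda g (delta g') = delta (g g') *)
Definition lambda (g : G) (x : G -> R[i]) : G -> R[i] :=
  fun h => x (g^-1 * h)%g.

(* Riesz basis of l_2(G) indexed by G: the image of the canonical orthonormal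
   basis (delta_g) under a bounded linear bijection of l_2(G) onto itself. *)
Definition riesz_basis (e : G -> (G -> R[i])) : Prop :=
  exists T : (G -> R[i]) -> (G -> R[i]),
    [/\ (forall x, in_l2 x -> in_l2 (T x)),
        (forall (c : R[i]) x y, in_l2 x -> in_l2 y ->
            T (fun h => c * x h + y h) = (fun h => c * T x h + T y h)),
        (exists M : R, forall x, in_l2 x -> l2norm2 (T x) <= M * l2norm2 x),
        ((forall x y, in_l2 x -> in_l2 y -> T x = T y -> x = y) /\
         (forall y, in_l2 y -> exists2 x, in_l2 x & T x = y)) &
        (forall g, T (delta g) = e g)].

End L2.

(* Main.v *)
Require Import Defs.
From HB Require Import structures.
From mathcomp Require Import all_boot all_order all_algebra.
From mathcomp Require Import complex.
From mathcomp Require Import all_classical all_reals all_analysis.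
From mathcomp Require Import ring lra.
From mathcomp Require finmap.
Import Order.TTheory GRing.Theory Num.Theory.
Import numFieldNormedType.Exports.
Local Open Scope ring_scope.
Local Open Scope classical_set_scope.
Section S.
Local Open Scope complex_scope.
Variables (R : realType) (G : groupType).
Local Notation q := (@sqmod R).


Lemma ReM (x y : R[i]) : complex.Re (x * y) = complex.Re x * complex.Re y - complex.Im x * complex.Im y.
Proof. by case: x => a b; case: y => c d. Qed.
Lemma ImM (x y : R[i]) : complex.Im (x * y) = complex.Re x * complex.Im y + complex.Im x * complex.Re y.
Proof. by case: x => a b; case: y => c d. Qed.
Lemma ReD (x y : R[i]) : complex.Re (x + y) = complex.Re x + complex.Re y.
Proof. by case: x => a b; case: y => c d. Qed.
Lemma ImD (x y : R[i]) : complex.Im (x + y) = complex.Im x + complex.Im y.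
Proof. by case: x => a b; case: y => c d. Qed.
Lemma Re0 : complex.Re (0 : R[i]) = 0. Proof. by []. Qed.
Lemma Im0 : complex.Im (0 : R[i]) = 0. Proof. by []. Qed.
Lemma sqmodM x y : q (x * y) = q x * q y.
Proof. rewrite /sqmod ReM ImM; ring. Qed.
Lemma sqmod_ge0 x : 0 <= q x.
Proof. by rewrite /sqmod addr_ge0 ?sqr_ge0. Qed.
Lemma sqmod_eq0 x : q x = 0 -> x = 0.
Proof. case: x => a b; rewrite /sqmod /= => H.
have ha : a = 0 by apply/eqP; rewrite -sqrf_eq0; apply/eqP; nra.
have hb : b = 0 by apply/eqP; rewrite -sqrf_eq0; apply/eqP; nra.
by rewrite ha hb. Qed.
Lemma sqmodD2 x y : q (x + y) <= 2 * q x + 2 * q y.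
Proof. rewrite /sqmod ReD ImD -subr_ge0.
have -> : 2 * (complex.Re x ^+ 2 + complex.Im x ^+ 2) + 2 * (complex.Re y ^+ 2 + complex.Im y ^+ 2) -
  ((complex.Re x + complex.Re y) ^+ 2 + (complex.Im x + complex.Im y) ^+ 2) =
  (complex.Re x - complex.Re y) ^+ 2 + (complex.Im x - complex.Im y) ^+ 2 by ring.
by rewrite addr_ge0 ?sqr_ge0. Qed.
Lemma sqmodCS A z P p : 0 < P -> 0 < p -> q (A + z) <= (P + p) * (q A / P + q z / p).
Proof.
move=> hP hp; rewrite /sqmod ReD ImD -subr_ge0.
set a1 := complex.Re A; set a2 := complex.Im A; set z1 := complex.Re z; set z2 := complex.Im z.
have -> : (P + p) * ((a1 ^+ 2 + a2 ^+ 2) / P + (z1 ^+ 2 + z2 ^+ 2) / p) - ((a1 + z1) ^+ 2 + (a2 + z2) ^+ 2)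
  = ((p * a1 - P * z1) ^+ 2 + (p * a2 - P * z2) ^+ 2) / (P * p).
  by field; rewrite ?gt_eqF.
by rewrite divr_ge0 ?addr_ge0 ?sqr_ge0 // mulr_ge0 // ltW.
Qed.

Lemma sqmodN (x : R[i]) : q (- x) = q x.
Proof. by case: x => a b; rewrite /sqmod /= !sqrrN. Qed.
Lemma sqmod0 : q 0 = 0.
Proof. by rewrite /sqmod /= expr0n /= addr0. Qed.

Implicit Types (x y : G -> R[i]).
Local Notation E x := (\esum_(g in [set: G]) (q (x g))%:E)%E.

Lemma esum_absE (x : G -> R[i]) :
  (\esum_(g in [set: G]) `|(q (x g))%:E|)%E = E x.
Proof. by apply: eq_esum => g _; rewrite gee0_abs // lee_fin sqmod_ge0. Qed.

Lemma l2_le x s : in_l2 x -> uniq s -> \sum_(k <- s) q (x k) <= l2norm2 x.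
Proof.
move=> hx us; rewrite /in_l2 /summable esum_absE in hx.
have E0 : (0 <= E x)%E by apply: esum_ge0 => g _; rewrite lee_fin sqmod_ge0.
have fin : E x \is a fin_num by rewrite ge0_fin_numE.
rewrite /l2norm2 -lee_fin fineK // -sumEFin; apply: esum_ge.
exists [set` s]; first by split; [exact: finite_seq | by []].
by rewrite -fsbig_seq.
Qed.

Lemma l2_bound x M : (forall s, uniq s -> \sum_(k <- s) q (x k) <= M) ->
  in_l2 x /\ l2norm2 x <= M.
Proof.
move=> H.
have hE : (E x <= M%:E)%E.
  apply: ge_ereal_sup => _ [A [finA _] <-].
  by rewrite fsbig_finite // sumEFin lee_fin; apply: H; exact: finmap.fset_uniq.
have E0 : (0 <= E x)%E by apply: esum_ge0 => g _; rewrite lee_fin sqmod_ge0.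
split; first by rewrite /in_l2 /summable esum_absE; exact: le_lt_trans hE (ltry M).
rewrite /l2norm2; move: E0 hE; case: (E x) => [r| |] //=; by rewrite lee_fin.
Qed.

Lemma l2_le_shift x h s : in_l2 x -> uniq s ->
  \sum_(k <- s) q (x (k * h)%g) <= l2norm2 x.
Proof.
move=> hx us; rewrite -(big_map (fun k => (k * h)%g) xpredT (fun k => q (x k))).
by apply: l2_le => //; rewrite map_inj_uniq //; exact: mulIg.
Qed.

Lemma l2_pt x k : in_l2 x -> q (x k) <= l2norm2 x.
Proof. by move=> hx; have := @l2_le x [:: k] hx isT; rewrite big_cons big_nil addr0. Qed.

Lemma l2_ge0 x : in_l2 x -> 0 <= l2norm2 x.
Proof. by move=> hx; have := @l2_le x [::] hx isT; rewrite big_nil. Qed.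

Lemma l2_T x (a b : R[i]) h1 h2 : in_l2 x ->
  in_l2 (fun k => a * x (k * h1)%g + b * x (k * h2)%g) /\
  l2norm2 (fun k => a * x (k * h1)%g + b * x (k * h2)%g) <= (2 * q a + 2 * q b) * l2norm2 x.
Proof.
move=> hx; apply: l2_bound => s us.
apply: (@le_trans _ _ (\sum_(k <- s) (2 * q a * q (x (k * h1)%g) + 2 * q b * q (x (k * h2)%g)))).
  by apply: ler_sum => k _; rewrite -!mulrA -!sqmodM; exact: sqmodD2.
rewrite big_split /= -!mulr_sumr (mulrDl (2 * q a)); apply: lerD; apply: ler_wpM2l;
  by [rewrite mulr_ge0 ?sqmod_ge0 | apply: l2_le_shift].
Qed.

Lemma l2_sub x y : in_l2 x -> in_l2 y -> in_l2 (fun k => x k - y k).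
Proof.
move=> hx hy; apply: (proj1 (@l2_bound _ (2 * l2norm2 x + 2 * l2norm2 y) _)) => s us.
apply: (@le_trans _ _ (\sum_(k <- s) (2 * q (x k) + 2 * q (y k)))).
  by apply: ler_sum => k _; rewrite -(sqmodN (y k)); exact: sqmodD2.
by rewrite big_split /= -!mulr_sumr; apply: lerD; apply: ler_wpM2l => //; apply: l2_le.
Qed.

Lemma T_inj (a b : R[i]) g1 g2 x y : q b < q a -> in_l2 x -> in_l2 y ->
  (fun h => a * x (h * g1^-1)%g + b * x (h * g2^-1)%g) =
  (fun h => a * y (h * g1^-1)%g + b * y (h * g2^-1)%g) -> x = y.
Proof.
move=> hab hx hy E.
pose z := fun k => x k - y k.
have hz : in_l2 z := @l2_sub x y hx hy.
pose v := (g1 * g2^-1)%g.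
have qa0 : 0 < q a by apply: le_lt_trans (sqmod_ge0 b) hab.
have qan : q a != 0 by rewrite gt_eqF.
have rec k : q (z k) = (q b / q a) * q (z (k * v)%g).
  have := congr1 (fun f => f (k * g1)%g) E => /=.
  rewrite mulgK /v mulgA => e.
  have : a * z k + b * z (k * g1 * g2^-1)%g = 0.
    by rewrite /z !mulrBr addrACA -opprD e subrr.
  move/eqP; rewrite addr_eq0 => /eqP /(congr1 q); rewrite sqmodN !sqmodM => H.
  by apply: (mulfI qan); rewrite H; field.
have iter n : forall k0, q (z k0) = (q b / q a) ^+ n * q (z (k0 * v ^+ n)%g).
  elim: n => [|n IH] k; first by rewrite expr0 mul1r expg0 mulg1.
  by rewrite rec IH exprS expgS !mulrA /v !mulgA.
have z0 k : z k = 0.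
  apply: sqmod_eq0; apply/eqP; rewrite eq_le sqmod_ge0 andbT.
  pose r := q b / q a.
  have r0 : 0 <= r by rewrite divr_ge0 ?sqmod_ge0 // ltW.
  have r1 : `|r| < 1 by rewrite ger0_norm // ltr_pdivrMr // mul1r.
  have bnd n : q (z k) <= r ^+ n * l2norm2 z.
    by rewrite (iter n) ler_wpM2l ?exprn_ge0 // l2_pt.
  have cv : (fun n => r ^+ n * l2norm2 z) @ \oo --> 0.
    rewrite -(mul0r (l2norm2 z)).
    apply: cvgMr_tmp; exact: (@cvg_expr R r r1).
  rewrite leNgt; apply/negP => hpos.
  have [N _ HN] := cvgr_lt _ cv _ hpos.
  by have := HN N (leqnn N) => /=; rewrite ltNge bnd.
apply/funext => k; have := z0 k; rewrite /z => /eqP; rewrite subr_eq0 => /eqP //.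
Qed.

Lemma sqmod1 : q 1 = 1.
Proof. by rewrite /sqmod /= expr1n expr0n /= addr0. Qed.
Lemma sqmodX (c : R[i]) n : q (c ^+ n) = q c ^+ n.
Proof. by elim: n => [|n IH]; rewrite ?expr0 ?sqmod1 // !exprS sqmodM IH. Qed.
Lemma sqmodV (a : R[i]) : a != 0 -> q (a^-1) = (q a)^-1.
Proof.
move=> an0; have qa0 : q a != 0 by apply/eqP => /sqmod_eq0 /eqP; rewrite (negPf an0).
by apply: (mulfI qa0); rewrite -sqmodM mulfV // sqmod1 mulfV.
Qed.
Lemma Re_sum (I : Type) (r : seq I) (P : pred I) (F : I -> R[i]) :
  complex.Re (\sum_(i <- r | P i) F i) = \sum_(i <- r | P i) complex.Re (F i).
Proof. exact: (big_morph _ ReD Re0). Qed.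
Lemma Im_sum (I : Type) (r : seq I) (P : pred I) (F : I -> R[i]) :
  complex.Im (\sum_(i <- r | P i) F i) = \sum_(i <- r | P i) complex.Im (F i).
Proof. exact: (big_morph _ ImD Im0). Qed.
Lemma complex_eta (z : R[i]) : z = (complex.Re z +i* complex.Im z).
Proof. by case: z. Qed.

Lemma abs_bound (r p Y : R) : 0 < p -> r ^+ 2 <= p ^+ 2 * Y -> `|r| <= p * ((1 + Y) / 2).
Proof.
move=> p0 h; have h2 : `|r| ^+ 2 = r ^+ 2 := real_normK (num_real r).
have u0 : 0 <= `|r| := normr_ge0 r.
move: h; rewrite -h2; move: u0; set u := `|r| => u0 h.
have : 0 <= (u - p) ^+ 2 := sqr_ge0 _.
nra.
Qed.

Lemma lerXn2 (x y : R) n : 0 <= x -> x <= y -> x ^+ n <= y ^+ n.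
Proof.
move=> x0 xy; elim: n => [|n IH]; first by rewrite !expr0.
by rewrite !exprS ler_pM // exprn_ge0.
Qed.

Lemma sqmod_CS_sum (z : nat -> R[i]) (p : nat -> R) N : (forall n, 0 < p n) ->
  q (\sum_(0 <= n < N) z n) <= (\sum_(0 <= n < N) p n) * (\sum_(0 <= n < N) q (z n) / p n).
Proof.
move=> hp; elim: N => [|N IH]; first by rewrite !big_geq // sqmod0 mul0r.
case: N IH => [|N] IH.
  by rewrite !big_nat1 mulrC divfK // gt_eqF.
rewrite !(big_nat_recr N.+1) //=.
set A := \sum_(0 <= i < N.+1) z i.
set P := \sum_(0 <= i < N.+1) p i.
set Q := \sum_(0 <= i < N.+1) q (z i) / p i.
have P0 : 0 < P.
  rewrite /P big_nat_recl //; apply: (lt_le_trans (hp 0%N)).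
  by rewrite lerDl sumr_ge0 // => i _; exact: ltW.
apply: le_trans (@sqmodCS A (z N.+1) P (p N.+1) P0 (hp _)) _.
apply: ler_wpM2l; first by rewrite addr_ge0 // ltW.
by rewrite lerD2r ler_pdivrMr // mulrC.
Qed.

Lemma cvg_sum_seq (f : G -> nat -> R) (l : G -> R) (s : seq G) :
  (forall k, f k n @[n --> \oo] --> l k) ->
  (fun N => \sum_(k <- s) f k N) @ \oo --> \sum_(k <- s) l k.
Proof.
move=> H; elim: s => [|k s IH].
  have -> : (fun N => \sum_(k <- [::]) f k N) = fun _ => 0 by apply/funext => N; rewrite big_nil.
  rewrite big_nil; exact: cvg_cst.
have -> : (fun N => \sum_(k0 <- k :: s) f k0 N) = (fun N => f k N + \sum_(k0 <- s) f k0 N).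
  by apply/funext => N; rewrite big_cons.
rewrite big_cons; exact: (cvgD (H k) IH).
Qed.

Lemma T_surj (a b : R[i]) g1 g2 y : q b < q a -> in_l2 y ->
  exists2 x, in_l2 x &
  (fun h => a * x (h * g1^-1)%g + b * x (h * g2^-1)%g) = y.
Proof.
move=> hab hy.
have qa0 : 0 < q a by apply: le_lt_trans (sqmod_ge0 b) hab.
have an0 : a != 0 by apply/eqP => a0; move: qa0; rewrite a0 sqmod0 ltxx.
pose c := - b / a.
have hqc : q c = q b / q a by rewrite /c sqmodM sqmodN sqmodV.
have qc0 : 0 <= q c := sqmod_ge0 c.
have qc1 : q c < 1 by rewrite hqc ltr_pdivrMr // mul1r.
pose rho := (1 + q c) / 2.
have rho0 : 0 < rho by rewrite /rho divr_gt0 // ltr_wpDr.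
have rho1 : rho < 1 by rewrite /rho ltr_pdivrMr // mul1r; lra.
have rho1' : `|rho| < 1 by rewrite ger0_norm // ltW.
have qcrho : q c <= rho * rho.
  rewrite -subr_ge0; have -> : rho * rho - q c = ((1 - q c) / 2) ^+ 2 by rewrite /rho; field.
  exact: sqr_ge0.
pose v := (g1 * g2^-1)%g.
pose w := fun k => y (k * g1)%g.
pose Y := l2norm2 y.
have Y0 : 0 <= Y := @l2_ge0 y hy.
have wY k : q (w k) <= Y := @l2_pt y _ hy.
pose t := fun k n => c ^+ n * w (k * v ^+ n)%g.
have tq k n : q (t k n) <= rho ^+ n * rho ^+ n * q (w (k * v ^+ n)%g).
  rewrite /t sqmodM sqmodX -exprMn ler_wpM2r ?sqmod_ge0 //.
  exact: lerXn2.
have tY k n : q (t k n) <= (rho ^+ n) ^+ 2 * Y.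
  apply: le_trans (tq k n) _; rewrite expr2; apply: ler_wpM2l; [by rewrite mulr_ge0 // exprn_ge0 // ltW | exact: wY].
have Rb k n : `|complex.Re (t k n)| <= rho ^+ n * ((1 + Y) / 2).
  apply: abs_bound; first exact: exprn_gt0.
  apply: le_trans (tY k n); rewrite /sqmod lerDl; exact: sqr_ge0.
have Ib k n : `|complex.Im (t k n)| <= rho ^+ n * ((1 + Y) / 2).
  apply: abs_bound; first exact: exprn_gt0.
  apply: le_trans (tY k n); rewrite /sqmod lerDr; exact: sqr_ge0.
have cR k : cvgn (series (fun n => complex.Re (t k n))).
  apply: normed_cvg; apply: (@series_le_cvg _ _ (geometric ((1 + Y) / 2) rho)).
  - by move=> n; rewrite normr_ge0.
  - by move=> n; apply: geometric_ge0; [rewrite divr_ge0 // addr_ge0 | exact: ltW].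
  - by move=> n; rewrite /geometric /= mulrC; exact: Rb.
  - exact: is_cvg_geometric_series.
have cI k : cvgn (series (fun n => complex.Im (t k n))).
  apply: normed_cvg; apply: (@series_le_cvg _ _ (geometric ((1 + Y) / 2) rho)).
  - by move=> n; rewrite normr_ge0.
  - by move=> n; apply: geometric_ge0; [rewrite divr_ge0 // addr_ge0 | exact: ltW].
  - by move=> n; rewrite /geometric /= mulrC; exact: Ib.
  - exact: is_cvg_geometric_series.
pose SR k := limn (series (fun n => complex.Re (t k n))).
pose SI k := limn (series (fun n => complex.Im (t k n))).
pose S k : R[i] := (SR k +i* SI k).
have tS k n : t k n.+1 = c * t (k * v)%g n.
  by rewrite /t exprS expgS mulgA mulrA.
have t0 k : t k 0%N = w k by rewrite /t expr0 mul1r expg0 mulg1.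
have serR k N : series (fun n => complex.Re (t k n)) N.+1 =
    complex.Re (w k) + (complex.Re c * series (fun n => complex.Re (t (k * v)%g n)) N
                        - complex.Im c * series (fun n => complex.Im (t (k * v)%g n)) N).
  rewrite /series /= big_nat_recl // t0; congr (_ + _).
  under eq_bigr do rewrite tS ReM.
  by rewrite sumrB -!mulr_sumr.
have serI k N : series (fun n => complex.Im (t k n)) N.+1 =
    complex.Im (w k) + (complex.Re c * series (fun n => complex.Im (t (k * v)%g n)) N
                        + complex.Im c * series (fun n => complex.Re (t (k * v)%g n)) N).
  rewrite /series /= big_nat_recl // t0; congr (_ + _).
  under eq_bigr do rewrite tS ImM.
  by rewrite big_split -!mulr_sumr.
have SRrec k : SR k = complex.Re (w k) + (complex.Re c * SR (k * v)%g - complex.Im c * SI (k * v)%g).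
  have h1 := cR k; rewrite -cvg_shiftS in h1.
  have e : [sequence series (fun n => complex.Re (t k n)) n.+1]_n =
    (fun N => complex.Re (w k) + (complex.Re c * series (fun n => complex.Re (t (k * v)%g n)) N
                        - complex.Im c * series (fun n => complex.Im (t (k * v)%g n)) N)).
    by apply/funext => N; rewrite /= serR.
  rewrite e in h1.
  have h2 : (fun N => complex.Re (w k) + (complex.Re c * series (fun n => complex.Re (t (k * v)%g n)) N
                        - complex.Im c * series (fun n => complex.Im (t (k * v)%g n)) N)) @ \oo -->
     complex.Re (w k) + (complex.Re c * SR (k * v)%g - complex.Im c * SI (k * v)%g).
    apply: cvgD; first exact: cvg_cst.
    by apply: cvgB; apply: cvgMl_tmp; [exact: cR | exact: cI].
  exact: (cvg_unique _ h1 h2).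
have SIrec k : SI k = complex.Im (w k) + (complex.Re c * SI (k * v)%g + complex.Im c * SR (k * v)%g).
  have h1 := cI k; rewrite -cvg_shiftS in h1.
  have e : [sequence series (fun n => complex.Im (t k n)) n.+1]_n =
    (fun N => complex.Im (w k) + (complex.Re c * series (fun n => complex.Im (t (k * v)%g n)) N
                        + complex.Im c * series (fun n => complex.Re (t (k * v)%g n)) N)).
    by apply/funext => N; rewrite /= serI.
  rewrite e in h1.
  have h2 : (fun N => complex.Im (w k) + (complex.Re c * series (fun n => complex.Im (t (k * v)%g n)) N
                        + complex.Im c * series (fun n => complex.Re (t (k * v)%g n)) N)) @ \oo -->
     complex.Im (w k) + (complex.Re c * SI (k * v)%g + complex.Im c * SR (k * v)%g).
    apply: cvgD; first exact: cvg_cst.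
    by apply: cvgD; apply: cvgMl_tmp; [exact: cI | exact: cR].
  exact: (cvg_unique _ h1 h2).
have Srec k : S k = w k + c * S (k * v)%g.
  have ReS k0 : complex.Re (S k0) = SR k0 by [].
  have ImS k0 : complex.Im (S k0) = SI k0 by [].
  by rewrite [RHS]complex_eta ReD ImD (ReM c) (ImM c) !ReS !ImS -SRrec -SIrec.
pose x := fun k => a^-1 * S k.
exists x; last first.
  apply/funext => h; rewrite /x.
  have e : S (h * g1^-1)%g = y h + c * S (h * g2^-1)%g.
    by rewrite Srec /w /v mulgVK mulgA mulgVK.
  rewrite e /c; field; done.
pose K := (1 - rho)^-1.
have K0 : 0 <= K by rewrite /K invr_ge0 subr_ge0 ltW.
have Ksum N : \sum_(0 <= n < N) rho ^+ n <= K.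
  have -> : \sum_(0 <= n < N) rho ^+ n = series (geometric 1 rho) N.
    by rewrite /series /=; apply: eq_bigr => n _; rewrite /geometric /= mul1r.
  rewrite geometric_seriesE ?lt_eqF // /= mul1r /K -[X in _ <= X]mul1r.
  apply: ler_wpM2r; first by rewrite invr_ge0 subr_ge0 ltW.
  by rewrite gerDl oppr_le0 exprn_ge0 // ltW.
apply: (proj1 (@l2_bound x (q a^-1 * (K * (K * Y))) _)) => s us.
rewrite (eq_bigr (fun k => q a^-1 * q (S k))); last by move=> k _; rewrite /x sqmodM.
rewrite -mulr_sumr; apply: ler_wpM2l; first exact: sqmod_ge0.
pose P N k := \sum_(0 <= n < N) t k n.
have qP k : (fun N => q (P N k)) @ \oo --> q (S k).
  have e : (fun N => q (P N k)) = (fun N =>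
      series (fun n => complex.Re (t k n)) N * series (fun n => complex.Re (t k n)) N +
      series (fun n => complex.Im (t k n)) N * series (fun n => complex.Im (t k n)) N).
    by apply/funext => N; rewrite /sqmod /P Re_sum Im_sum !expr2.
  rewrite e /sqmod /= !expr2.
  exact: (cvgD (cvgM (cR k) (cR k)) (cvgM (cI k) (cI k))).
have sumC := @cvg_sum_seq (fun k N => q (P N k)) (fun k => q (S k)) s qP.
have bnd N : \sum_(k <- s) q (P N k) <= K * (K * Y).
  have bk k : q (P N k) <= K * \sum_(0 <= n < N) rho ^+ n * q (w (k * v ^+ n)%g).
    apply: le_trans (sqmod_CS_sum (t k) (fun n => rho ^+ n) N (fun n => exprn_gt0 n rho0)) _.
    apply: ler_pM.
    - by apply: sumr_ge0 => n _; rewrite exprn_ge0 // ltW.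
    - by apply: sumr_ge0 => n _; rewrite divr_ge0 ?sqmod_ge0 // exprn_ge0 // ltW.
    - exact: Ksum.
    - apply: ler_sum => n _; rewrite ler_pdivrMr ?exprn_gt0 // mulrAC; exact: tq.
  apply: le_trans (ler_sum _ (fun k _ => bk k)) _.
  rewrite -mulr_sumr; apply: ler_wpM2l => //.
  rewrite exchange_big /=.
  apply: (@le_trans _ _ (\sum_(0 <= n < N) rho ^+ n * Y)).
    apply: ler_sum => n _; rewrite -mulr_sumr; apply: ler_wpM2l; first by rewrite exprn_ge0 // ltW.
    rewrite /w; under eq_bigr do rewrite -mulgA.
    exact: l2_le_shift.
  by rewrite -mulr_suml; apply: ler_wpM2r.
rewrite leNgt; apply/negP => hgt.
have [N _ HN] := cvgr_gt _ sumC _ hgt.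
by have := HN N (leqnn N) => /=; rewrite ltNge bnd.
Qed.

Lemma eq_shift (h g k : G) : ((h * k^-1)%g == g) = ((g^-1 * h)%g == k).
Proof.
apply/eqP/eqP => E.
  by rewrite -E invgM invgK mulgVK.
by rewrite -E invgM invgK mulgA mulgV mul1g.
Qed.

Lemma main_lt (g1 g2 : G) (a b : R[i]) : q b < q a ->
  riesz_basis (fun g : G =>
    lambda g (fun h : G => a * delta R g1 h + b * delta R g2 h)).
Proof.
move=> hab.
exists (fun x h => a * x (h * g1^-1)%g + b * x (h * g2^-1)%g).
split.
- by move=> x hx; case: (@l2_T x a b (g1^-1)%g (g2^-1)%g hx).
- by move=> c0 x y hx hy; apply/funext => h /=; ring.
- by exists (2 * q a + 2 * q b) => x hx; case: (@l2_T x a b (g1^-1)%g (g2^-1)%g hx).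
- split; first move=> x y hx hy /= Hxy.
  exact: (@T_inj a b g1 g2 x y hab hx hy Hxy).
  by move=> y hy; exact: T_surj.
- by move=> g; apply/funext => h; rewrite /lambda /delta !eq_shift.
Qed.
End S.

Theorem proposition7p5 (R : realType) (G : groupType)
  (Gcount : countable [set: G])
  (g1 g2 : G) (a b : R[i]) :
  g1 != g2 -> a != 0 -> b != 0 -> `|a| != `|b| ->
  riesz_basis (fun g : G =>
    lambda g (fun h : G => a * delta R g1 h + b * delta R g2 h)).
Proof.
move=> _ _ _ hab.
have hq : sqmod a != sqmod b.
  apply/eqP => e; move/eqP: hab; apply.
  by rewrite !normc_def; move: e; rewrite /sqmod => ->.
case: ltgtP hq => // h _; last exact: main_lt.
have -> : (fun g : G => lambda g (fun h : G => a * delta R g1 h + b * delta R g2 h)) =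
  (fun g : G => lambda g (fun h : G => b * delta R g2 h + a * delta R g1 h)).
  by apply/funext => g; apply/funext => k; rewrite /lambda addrC.
exact: main_lt.
Qed.
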